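(* Let $X\in\mathbf{R}$, $Y>0$, and let $f\colon(X,X+Y]\to\mathbf{R}$ be a real function. Let $d,H_1,\dots,H_d$ be natural numbers with $H_1+\cdots+H_d\le Y$. Then \[ \Bigl|\frac{1}{Y}\sum_{X<n\le X+Y}e(f(n))\Bigr|\le B\max\bigl(H_1^{-1/2},H_2^{-1/4},\dots,H_d^{-1/2^d},\,B^{-1/2^d}T_d^{1/2^d}\bigr), \] where $B=2+2\sqrt2$ and \[ T_d=\frac{1}{YH_1\cdots H_d}\sum_{\mathbf a}\Bigl|\sum_{n\in I(\mathbf a)}e(f_{\mathbf a}(n))\Bigr|, \] the outer sum running over all integer vectors $\mathbf a=(a_1,\dots,a_d)$ with $1\le a_r\le H_r-1$ for each $r$.
   Context: $e(x)=e^{2\pi i x}$; sums over $n$ are over integers. For real $a_1,\dots,a_h$ define inductively $f_{(a_1)}(x)=f(x+a_1)-f(x)$ and $f_{(a_1,\dots,a_h)}(x)=f_{(a_1,\dots,a_{h-1})}(x+a_h)-f_{(a_1,\dots,a_{h-1})}(x)$. For positive $a_j$, $f_{\mathbf a}$ is defined exactly on $I(\mathbf a)=(X,X+Y-\sum_j a_j]$ (possibly empty), and by convention $e(f_{\mathbf a}(x))=0$ when $f_{\mathbf a}(x)$ is undefined. *)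

(* Defs.v *)
From Stdlib Require Import Reals ZArith List.
From Coquelicot Require Import Coquelicot.
Open Scope R_scope.

Definition e (x : R) : C := (cos (2 * PI * x), sin (2 * PI * x)).

(* Sum of g n over the integers n with lo <= n <= hi (empty if hi < lo). *)
Definition sumZ (lo hi : Z) (g : Z -> C) : C :=
  fold_right Cplus 0%C
    (map (fun k : nat => g (lo + Z.of_nat k)%Z) (seq 0 (Z.to_nat (hi - lo + 1)))).

(* Sum of g n over the integers n with A < n <= B'.
   [up A] is the least integer > A, [up B' - 1] the greatest integer <= B'. *)
Definition sum_int_in (A B' : R) (g : Z -> C) : C :=
  sumZ (up A) (up B' - 1)%Z g.

(* Iterated difference: for l = [a_1; ...; a_h],
   fdiff f l = f_(a_1,...,a_h), with f_(a_1)(x) = f(x+a_1) - f(x) and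
   f_(a_1..a_h)(x) = f_(a_1..a_{h-1})(x+a_h) - f_(a_1..a_{h-1})(x). *)
Definition fdiff (f : R -> R) (l : list R) : R -> R :=
  fold_left (fun g a => fun x => g (x + a) - g x) l f.

(* All integer vectors [a_1; ...; a_k] with 1 <= a_r <= H_r - 1, where
   H_r is H (r-1) (indices shifted to start at 0). *)
Fixpoint allvecs (H : nat -> nat) (k : nat) : list (list nat) :=
  match k with
  | O => nil :: nil
  | S k' => flat_map (fun v => map (fun a => v ++ a :: nil) (seq 1 (H k' - 1)))
                     (allvecs H k')
  end.

Definition sumR (l : list R) : R := fold_right Rplus 0 l.
Definition prodR (l : list R) : R := fold_right Rmult 1 l.

Definition Td (f : R -> R) (X Y : R) (d : nat) (H : nat -> nat) : R :=
  / (Y * prodR (map (fun r => INR (H r)) (seq 0 d))) *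
  sumR (map (fun v : list nat =>
          let a := map INR v in
          Cmod (sum_int_in X (X + Y - sumR a)
                  (fun n => e (fdiff f a (IZR n)))))
        (allvecs H d)).

(* Real power x^y for x >= 0, with the convention 0^y = 0 (y > 0 here). *)
Definition rpow (x y : R) : R :=
  if Req_EM_T x 0 then 0 else Rpower x y.

Definition Bconst : R := 2 + 2 * sqrt 2.

(* Main.v *)
Require Import Defs.
From Stdlib Require Import Reals ZArith List.
From Coquelicot Require Import Coquelicot.
From Stdlib Require Import Lia Lra Psatz.
Open Scope R_scope.

Fixpoint sm (n : nat) (F : nat -> R) : R :=
  match n with O => 0 | S n' => sm n' F + F n' end.

Lemma sm_ext n F G : (forall i, (i < n)%nat -> F i = G i) -> sm n F = sm n G.
Proof. induction n; simpl; intros h; auto. rewrite IHn by (intros; apply h; lia). rewrite h by lia; auto. Qed.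

Lemma sm_plus n F G : sm n (fun i => F i + G i) = sm n F + sm n G.
Proof. induction n; simpl; [lra|]. rewrite IHn; lra. Qed.

Lemma sm_scal n c F : sm n (fun i => c * F i) = c * sm n F.
Proof. induction n; simpl; [lra|]. rewrite IHn; lra. Qed.

Lemma sm_const n c : sm n (fun _ => c) = INR n * c.
Proof. induction n; simpl sm; [simpl; lra|]. rewrite IHn, S_INR; lra. Qed.

Lemma sm_zero n F : (forall i, (i < n)%nat -> F i = 0) -> sm n F = 0.
Proof. intros h. rewrite (sm_ext n F (fun _ => 0)) by auto. rewrite sm_const; lra. Qed.

Lemma sm_le n F G : (forall i, (i < n)%nat -> F i <= G i) -> sm n F <= sm n G.
Proof. induction n; simpl; intros h; [lra|]. specialize (h n) as h1. assert (sm n F <= sm n G) by (apply IHn; intros; apply h; lia). specialize (h1 ltac:(lia)). lra. Qed.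

Lemma sm_nonneg n F : (forall i, (i < n)%nat -> 0 <= F i) -> 0 <= sm n F.
Proof. intros h. replace 0 with (sm n (fun _ => 0)) by (rewrite sm_const; lra). apply sm_le; auto. Qed.

Lemma sm_split n m F : sm (n + m) F = sm n F + sm m (fun i => F (n + i)%nat).
Proof. induction m; simpl. rewrite Nat.add_0_r; lra. rewrite Nat.add_succ_r; simpl. rewrite IHm; lra. Qed.

Lemma sm_front n F : sm (S n) F = F O + sm n (fun i => F (S i)).
Proof. change (S n) with (1 + n)%nat. rewrite sm_split. simpl. lra. Qed.

Lemma sm_rev n F : sm n (fun i => F (n - 1 - i)%nat) = sm n F.
Proof. induction n. reflexivity.
  rewrite sm_front. replace (S n - 1 - 0)%nat with n by lia.
  rewrite (sm_ext n _ (fun i => F (n - 1 - i)%nat)) by (intros; f_equal; lia).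
  rewrite IHn. simpl; lra. Qed.

Lemma sm_swap n m F : sm n (fun i => sm m (fun j => F i j)) = sm m (fun j => sm n (fun i => F i j)).
Proof. induction n; simpl. rewrite sm_zero; auto. rewrite IHn, <- sm_plus. reflexivity. Qed.

Lemma sm_mono_n n m F : (forall i, 0 <= F i) -> (n <= m)%nat -> sm n F <= sm m F.
Proof. intros h hl. replace m with (n + (m - n))%nat by lia. rewrite sm_split.
  assert (0 <= sm (m - n) (fun i => F (n + i)%nat)) by (apply sm_nonneg; auto). lra. Qed.

Lemma sm_mult_r n F c : sm n F * c = sm n (fun i => F i * c).
Proof. rewrite Rmult_comm, <- sm_scal. apply sm_ext; intros; ring. Qed.

Lemma sm_sq n F : sm n F ^ 2 = sm n (fun i => sm n (fun j => F i * F j)).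
Proof. replace (sm n F ^ 2) with (sm n F * sm n F) by ring. rewrite sm_mult_r. apply sm_ext; intros. rewrite sm_scal; auto. Qed.

Lemma sm_shift n h F : sm n (fun i => F (i + h)%nat) = sm (h + n) F - sm h F.
Proof. rewrite sm_split. rewrite (sm_ext n _ (fun i => F (h + i)%nat)) by (intros; f_equal; lia). lra. Qed.

Lemma sm_support n m F : (forall j, (n <= j)%nat -> F j = 0) -> (n <= m)%nat -> sm m F = sm n F.
Proof. intros h hl. replace m with (n + (m - n))%nat by lia. rewrite sm_split.
  rewrite (sm_zero (m - n) (fun i => F (n + i)%nat)); [lra|]. intros; apply h; lia. Qed.

Definition sumR_app l1 l2 : sumR (l1 ++ l2) = sumR l1 + sumR l2.
Proof. induction l1; simpl; [lra|]. unfold sumR in *; simpl. rewrite IHl1; lra. Qed.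

Lemma sumR_seq (F : nat -> R) k n : sumR (map F (seq k n)) = sm n (fun i => F (k + i)%nat).
Proof. revert k; induction n; intros k; [reflexivity|].
  rewrite sm_front. simpl. unfold sumR in *. simpl. rewrite IHn. rewrite Nat.add_0_r.
  f_equal. apply sm_ext; intros; f_equal; lia. Qed.

Lemma Re_fold (F : nat -> C) k n : Re (fold_right Cplus 0%C (map F (seq k n))) = sm n (fun i => Re (F (k + i)%nat)).
Proof. revert k; induction n; intros k; [reflexivity|].
  rewrite sm_front. cbn [seq map fold_right].
  transitivity (Re (F k) + Re (fold_right Cplus 0%C (map F (seq (S k) n)))); [reflexivity|].
  rewrite IHn, Nat.add_0_r. f_equal. apply sm_ext; intros; do 2 f_equal; lia. Qed.

Lemma Im_fold (F : nat -> C) k n : Im (fold_right Cplus 0%C (map F (seq k n))) = sm n (fun i => Im (F (k + i)%nat)).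
Proof. revert k; induction n; intros k; [reflexivity|].
  rewrite sm_front. cbn [seq map fold_right].
  transitivity (Im (F k) + Im (fold_right Cplus 0%C (map F (seq (S k) n)))); [reflexivity|].
  rewrite IHn, Nat.add_0_r. f_equal. apply sm_ext; intros; do 2 f_equal; lia. Qed.

Lemma sumR_sq_nonneg l : 0 <= sumR (map (fun x => x ^ 2) l).
Proof. induction l as [|a l IH]; [unfold sumR; simpl; lra|]. unfold sumR in *; cbn [map fold_right].
  assert (0 <= a ^ 2) by apply pow2_ge_0. lra. Qed.

Lemma CS_list (l : list R) : sumR l ^ 2 <= INR (length l) * sumR (map (fun x => x ^ 2) l).
Proof. induction l as [|a l IH]; [unfold sumR; simpl; lra|].
  pose proof (sumR_sq_nonneg l) as hQ.
  unfold sumR in *; cbn [map fold_right length] in *.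
  set (S := fold_right Rplus 0 l) in *. set (Q := fold_right Rplus 0 (map (fun x => x^2) l)) in *.
  rewrite S_INR. set (n := INR (length l)) in *. assert (0 <= n) by apply pos_INR.
  destruct (Req_dec n 0) as [h0|h0].
  - rewrite h0 in IH. assert (S = 0) by nra. rewrite h0, H0. nra.
  - assert (n * (2 * a * S) <= n * (n * a^2 + Q)) by (pose proof (pow2_ge_0 (n * a - S)); nra).
    assert (2 * a * S <= n * a^2 + Q) by (apply Rmult_le_reg_l with n; lra). nra.
Qed.

Lemma CS_sm n F : sm n F ^ 2 <= INR n * sm n (fun i => F i ^ 2).
Proof. pose proof (CS_list (map F (seq 0 n))). rewrite map_map, length_map, length_seq in H.
  rewrite !sumR_seq in H. simpl in H. exact H. Qed.


Definition ext (N : nat) (u : nat -> R) k := if (k <? N)%nat then u k else 0.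
Definition ww (N H : nat) (u : nat -> R) j := if (H - 1 <=? j)%nat then ext N u (j - (H - 1)) else 0.
Definition MM (N H : nat) := (N + H - 1)%nat.
Definition YY (N H : nat) u m := sm H (fun h => ww N H u (m + h)%nat).
Definition rho (N H : nat) u h h' := sm (MM N H) (fun m => ww N H u (m + h)%nat * ww N H u (m + h')%nat).

Lemma ww_low (N H : nat) u j : (j < H - 1)%nat -> ww N H u j = 0.
Proof. intros. unfold ww. destruct (Nat.leb_spec (H-1) j); [lia|auto]. Qed.

Lemma ww_high (N H : nat) (hH : (1 <= H)%nat) u j : ((MM N H) <= j)%nat -> ww N H u j = 0.
Proof. intros. unfold ww, ext, MM in *. destruct (Nat.leb_spec (H-1) j); auto.
  destruct (Nat.ltb_spec (j - (H-1)) N); [lia|auto]. Qed.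

Lemma ww_mid (N H : nat) u i : ww N H u (H - 1 + i)%nat = ext N u i.
Proof. unfold ww. destruct (Nat.leb_spec (H-1) (H - 1 + i)); [|lia]. f_equal; lia. Qed.

Lemma sm_ww (N H : nat) (hH : (1 <= H)%nat) u : sm (MM N H) (ww N H u) = sm N u.
Proof. replace (MM N H) with (H - 1 + N)%nat by (unfold MM; lia). rewrite sm_split.
  rewrite sm_zero by (intros; apply ww_low; lia). rewrite Rplus_0_l.
  apply sm_ext; intros. rewrite ww_mid. unfold ext. destruct (Nat.ltb_spec i N); [auto|lia]. Qed.

Lemma claim1 (N H : nat) (hH : (1 <= H)%nat) u : sm (MM N H) (YY N H u) = INR H * sm N u.
Proof. unfold YY. rewrite sm_swap. rewrite <- sm_const. apply sm_ext; intros h hh.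
  rewrite sm_shift. rewrite (sm_zero h (ww N H u)) by (intros; apply ww_low; lia).
  rewrite (sm_support (MM N H) (h + (MM N H))) by (try apply (ww_high N H hH); lia). rewrite (sm_ww N H hH). lra. Qed.

Lemma claim2 (N H : nat) u : sm (MM N H) (fun m => YY N H u m ^ 2) = sm H (fun h => sm H (fun h' => rho N H u h h')).
Proof. unfold YY, rho. rewrite (sm_ext (MM N H) _ (fun m => sm H (fun h => sm H (fun h' => ww N H u (m + h)%nat * ww N H u (m + h')%nat)))) by (intros; apply sm_sq).
  rewrite sm_swap. apply sm_ext; intros. rewrite sm_swap. reflexivity. Qed.

Lemma claim3 (N H : nat) (hH : (1 <= H)%nat) u h a : (h <= H - 1)%nat -> rho N H u h (h + a) = sm (N - a) (fun k => u k * u (k + a)%nat).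
Proof. intros hh. unfold rho.
  rewrite (sm_ext (MM N H) _ (fun m => (fun j => ww N H u j * ww N H u (j + a)%nat) (m + h)%nat)) by (intros; cbv beta; rewrite Nat.add_assoc; reflexivity).
  rewrite (sm_shift (MM N H) h (fun j => ww N H u j * ww N H u (j + a)%nat)). rewrite (sm_zero h) by (intros; simpl; rewrite ww_low by lia; lra).
  rewrite (sm_support (MM N H) (h + (MM N H))) by (try (intros; simpl; rewrite (ww_high N H hH) by lia; lra); lia).
  replace (MM N H) with (H - 1 + N)%nat by (unfold MM; lia). rewrite sm_split.
  rewrite sm_zero by (intros; simpl; rewrite ww_low by lia; lra).
  replace N with ((N - a) + (N - (N - a)))%nat at 1 by lia. rewrite sm_split.
  rewrite (sm_zero (N - (N - a))).
  2:{ intros i hi. simpl. replace (H - 1 + (N - a + i) + a)%nat with (H - 1 + (N - a + i + a))%nat by lia.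
      rewrite !ww_mid. unfold ext. destruct (Nat.ltb_spec (N - a + i + a) N); [lia|lra]. }
  rewrite (sm_ext (N - a) _ (fun k => u k * u (k + a)%nat)). lra.
  intros i hi. simpl. replace (H - 1 + i + a)%nat with (H - 1 + (i + a))%nat by lia.
  rewrite !ww_mid. unfold ext. destruct (Nat.ltb_spec i N); [|lia]. destruct (Nat.ltb_spec (i + a) N); [|lia]. auto.
Qed.

Lemma rho_sym (N H : nat) u h h' : rho N H u h h' = rho N H u h' h.
Proof. unfold rho. apply sm_ext; intros; ring. Qed.

Definition G (N : nat) (c s : nat -> R) a := sm (N - a) (fun k => c k * c (k + a)%nat + s k * s (k + a)%nat).
Definition PP (N H : nat) (c s : nat -> R) h h' := rho N H c h h' + rho N H s h h'.

Lemma PP_G (N H : nat) (hH : (1 <= H)%nat) c s h a : (h <= H - 1)%nat -> PP N H c s h (h + a) = G N c s a.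
Proof. intros. unfold PP, G. rewrite !claim3 by auto. rewrite <- sm_plus. reflexivity. Qed.

Definition Phi (N H : nat) (c s : nat -> R) := sm (H - 1) (fun b => Rabs (G N c s (S b))).

Lemma claim4 (N H : nat) (hH : (1 <= H)%nat) c s h : (h < H)%nat -> sm H (PP N H c s h) <= G N c s O + 2 * Phi N H c s.
Proof. intros hh. replace H with (S h + (H - S h))%nat at 1 by lia. rewrite sm_split.
  rewrite <- sm_rev. replace (S h - 1)%nat with h by lia.
  rewrite (sm_ext (S h) _ (G N c s)).
  2:{ intros i hi. unfold PP. rewrite (rho_sym N H c), (rho_sym N H s). fold (PP N H c s (h - i)%nat h).
      replace h with (h - i + i)%nat at 2 by lia. replace (h - 0 - i)%nat with (h - i)%nat by lia. apply PP_G; lia. }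
  rewrite (sm_ext (H - S h) _ (fun i => G N c s (S i))).
  2:{ intros i hi. replace (S h + i)%nat with (h + S i)%nat by lia. apply PP_G; lia. }
  rewrite sm_front.
  assert (sm h (fun i => G N c s (S i)) <= Phi N H c s).
  { apply Rle_trans with (sm h (fun i => Rabs (G N c s (S i)))). apply sm_le; intros; apply Rle_abs.
    apply sm_mono_n; [intros; apply Rabs_pos|lia]. }
  assert (sm (H - S h) (fun i => G N c s (S i)) <= Phi N H c s).
  { apply Rle_trans with (sm (H - S h) (fun i => Rabs (G N c s (S i)))). apply sm_le; intros; apply Rle_abs.
    apply sm_mono_n; [intros; apply Rabs_pos|lia]. }
  lra. Qed.


Lemma G0 (N : nat) (c s : nat -> R) (hcs : forall k, (k < N)%nat -> c k ^ 2 + s k ^ 2 = 1) : G N c s O = INR N.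
Proof. unfold G. rewrite Nat.sub_0_r. rewrite <- (Rmult_1_r (INR N)), <- sm_const.
  apply sm_ext; intros. rewrite Nat.add_0_r. rewrite <- (hcs i) by auto. ring. Qed.

Lemma vdc_real (N H : nat) (hH : (1 <= H)%nat) (c s : nat -> R) (hcs : forall k, (k < N)%nat -> c k ^ 2 + s k ^ 2 = 1) : INR H ^ 2 * (sm N c ^ 2 + sm N s ^ 2) <= INR (MM N H) * INR H * (INR N + 2 * Phi N H c s).
Proof.
  assert (e1 : INR H ^ 2 * (sm N c ^ 2 + sm N s ^ 2) = sm (MM N H) (YY N H c) ^ 2 + sm (MM N H) (YY N H s) ^ 2)
    by (rewrite !(claim1 N H hH); ring).
  rewrite e1.
  pose proof (CS_sm (MM N H) (YY N H c)). pose proof (CS_sm (MM N H) (YY N H s)).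
  assert (e2 : sm (MM N H) (fun i => YY N H c i ^ 2) + sm (MM N H) (fun i => YY N H s i ^ 2) = sm H (fun h => sm H (PP N H c s h))).
  { rewrite !claim2. rewrite <- sm_plus. apply sm_ext; intros. rewrite <- sm_plus. reflexivity. }
  assert (sm H (fun h => sm H (PP N H c s h)) <= INR H * (INR N + 2 * Phi N H c s)).
  { rewrite <- sm_const. apply sm_le. intros. rewrite <- (G0 N c s hcs). apply claim4; auto. }
  assert (0 <= INR (MM N H)) by apply pos_INR.
  assert (INR (MM N H) * (sm (MM N H) (fun i => YY N H c i ^ 2) + sm (MM N H) (fun i => YY N H s i ^ 2)) <= INR (MM N H) * (INR H * (INR N + 2 * Phi N H c s))).
  { apply Rmult_le_compat_l; auto. lra. }
  nra.
Qed.

Lemma up_sub_nat x a : up (x - INR a) = (up x - Z.of_nat a)%Z.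
Proof. destruct (archimed x) as [h1 h2]. symmetry. apply tech_up.
  - rewrite minus_IZR, <- INR_IZR_INZ. lra.
  - rewrite minus_IZR, <- INR_IZR_INZ. lra. Qed.

Lemma INR_Zto_nat z : (0 <= z)%Z -> INR (Z.to_nat z) = IZR z.
Proof. intros. rewrite INR_IZR_INZ, Z2Nat.id; auto. Qed.

Lemma count_bound X Y' : INR (Z.to_nat (up (X + Y') - 1 - up X + 1)) <= Y' + 1 \/ Z.to_nat (up (X + Y') - 1 - up X + 1) = O.
Proof. destruct (Z_lt_le_dec (up (X + Y') - 1 - up X + 1) 0).
  - right. lia.
  - left. rewrite INR_Zto_nat by auto. destruct (archimed X). destruct (archimed (X + Y')).
    rewrite plus_IZR, !minus_IZR. lra. Qed.

Lemma one_step (g : R -> R) (X Y' Y : R) (Hn : nat) :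
 (1 <= Hn)%nat -> 1 <= Y -> Y' <= Y -> INR Hn <= Y ->
 Cmod (sum_int_in X (X + Y') (fun n => e (g (IZR n)))) ^ 2 <=
 2 * Y / INR Hn * (2 * Y + 2 * sumR (map (fun a => Cmod (sum_int_in X (X + Y' - INR a)
     (fun n => e (g (IZR n + INR a) - g (IZR n))))) (seq 1 (Hn - 1)))).
Proof.
  intros hH hY hY' hHY.
  set (L := up X). set (U := up (X + Y')).
  set (N := Z.to_nat (U - 1 - L + 1)).
  set (c := fun k : nat => cos (2 * PI * g (IZR (L + Z.of_nat k)))).
  set (s := fun k : nat => sin (2 * PI * g (IZR (L + Z.of_nat k)))).
  assert (hcs : forall k, (k < N)%nat -> c k ^ 2 + s k ^ 2 = 1).
  { intros k _. unfold c, s. pose proof (sin2_cos2 (2 * PI * g (IZR (L + Z.of_nat k)))). unfold Rsqr in H. nra. }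
  pose proof (vdc_real N Hn hH c s hcs) as V.
  assert (E1 : Cmod (sum_int_in X (X + Y') (fun n => e (g (IZR n)))) ^ 2 = sm N c ^ 2 + sm N s ^ 2).
  { rewrite Cmod2_alt. unfold sum_int_in, sumZ. fold L U N.
    rewrite Re_fold, Im_fold. reflexivity. }
  set (Sa := fun a : nat => Cmod (sum_int_in X (X + Y' - INR a) (fun n => e (g (IZR n + INR a) - g (IZR n))))).
  assert (E2 : forall a, Rabs (G N c s a) <= Sa a).
  { intros a. unfold Sa. eapply Rle_trans; [|apply re_le_Cmod]. right. f_equal.
    unfold sum_int_in, sumZ. rewrite up_sub_nat. fold L U.
    replace (Z.to_nat (U - Z.of_nat a - 1 - L + 1)) with (N - a)%nat by (unfold N; lia).
    rewrite Re_fold. unfold G. apply sm_ext. intros i _. unfold Re, e. simpl fst.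
    replace (IZR (L + Z.of_nat i) + INR a) with (IZR (L + Z.of_nat (i + a))) by
      (rewrite INR_IZR_INZ, Nat2Z.inj_add, !plus_IZR; ring).
    unfold c, s. cbv beta.
    replace (2 * PI * (g (IZR (L + Z.of_nat (i + a))) - g (IZR (L + Z.of_nat i)))) with
      (2 * PI * g (IZR (L + Z.of_nat (i + a))) - 2 * PI * g (IZR (L + Z.of_nat i))) by ring.
    rewrite cos_minus. ring. }
  assert (E3 : Phi N Hn c s <= sumR (map Sa (seq 1 (Hn - 1)))).
  { rewrite sumR_seq. unfold Phi. apply sm_le. intros. apply E2. }
  fold Sa. rewrite E1.
  set (Sg := sumR (map Sa (seq 1 (Hn - 1)))) in *.
  assert (hPhi : 0 <= Phi N Hn c s) by (unfold Phi; apply sm_nonneg; intros; apply Rabs_pos).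
  assert (hN : INR N <= Y + 1).
  { destruct (count_bound X Y') as [h|h]; fold L U N in h. lra. rewrite h; simpl; lra. }
  assert (hM : INR (MM N Hn) <= 2 * Y).
  { unfold MM. rewrite minus_INR by lia. rewrite plus_INR. simpl. lra. }
  assert (hM0 : 0 <= INR (MM N Hn)) by apply pos_INR.
  assert (hN0 : 0 <= INR N) by apply pos_INR.
  assert (h1 : 1 <= INR Hn) by (apply (le_INR 1); lia).
  set (K := sm N c ^ 2 + sm N s ^ 2) in *.
  set (h := INR Hn) in *.
  assert (W : INR (MM N Hn) * h * (INR N + 2 * Phi N Hn c s) <= 2 * Y * h * (2 * Y + 2 * Sg)).
  { apply Rmult_le_compat; try nra. }
  assert (W2 : h * K <= 2 * Y * (2 * Y + 2 * Sg)).
  { apply Rmult_le_reg_l with h. lra. nra. }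
  apply Rmult_le_reg_l with h. lra.
  replace (h * (2 * Y / h * (2 * Y + 2 * Sg))) with (2 * Y * (2 * Y + 2 * Sg)) by (field; lra).
  exact W2.
Qed.

Definition Cv f X Y (v : list nat) := Cmod (sum_int_in X (X + Y - sumR (map INR v)) (fun n => e (fdiff f (map INR v) (IZR n)))).
Definition Pd (H : nat -> nat) d := prodR (map (fun r => INR (H r)) (seq 0 d)).

Lemma Td_eq f X Y d H : Td f X Y d H = / (Y * Pd H d) * sumR (map (Cv f X Y) (allvecs H d)).
Proof. reflexivity. Qed.

Lemma fdiff_app f l x : fdiff f (l ++ x :: nil) = fun y => fdiff f l (y + x) - fdiff f l y.
Proof. unfold fdiff. rewrite fold_left_app. reflexivity. Qed.

Lemma Cv_app f X Y v a : Cv f X Y (v ++ a :: nil) =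
  Cmod (sum_int_in X (X + (Y - sumR (map INR v)) - INR a)
     (fun n => e (fdiff f (map INR v) (IZR n + INR a) - fdiff f (map INR v) (IZR n)))).
Proof. unfold Cv. rewrite map_app. change (map INR (a :: nil)) with (INR a :: nil). rewrite fdiff_app. rewrite sumR_app.
  replace (X + Y - (sumR (map INR v) + sumR (INR a :: nil))) with (X + (Y - sumR (map INR v)) - INR a)
    by (unfold sumR; simpl; ring). reflexivity. Qed.

Lemma sumR_flat {A B : Type} (F : B -> R) (g : A -> list B) V :
  sumR (map F (flat_map g V)) = sumR (map (fun v => sumR (map F (g v))) V).
Proof. induction V; [reflexivity|]. simpl flat_map. rewrite map_app, sumR_app, IHV. reflexivity. Qed.

Lemma sumR_le_map {A : Type} (F G : A -> R) l : (forall x, F x <= G x) -> sumR (map F l) <= sumR (map G l).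
Proof. intros h; induction l; unfold sumR in *; simpl; [lra|]. specialize (h a). lra. Qed.

Lemma sumR_nonneg_map {A : Type} (F : A -> R) l : (forall x, 0 <= F x) -> 0 <= sumR (map F l).
Proof. intros h; induction l; unfold sumR in *; simpl; [lra|]. specialize (h a). lra. Qed.

Lemma sumR_affine {A : Type} (F : A -> R) a b l :
  sumR (map (fun v => a + b * F v) l) = INR (length l) * a + b * sumR (map F l).
Proof. induction l; unfold sumR in *; cbn [map fold_right length]; [simpl; lra|]. rewrite IHl. rewrite S_INR. ring. Qed.

Lemma prodR_app1 l x : prodR (l ++ x :: nil) = prodR l * x.
Proof. induction l; unfold prodR in *; simpl; [ring|]. rewrite IHl; ring. Qed.

Lemma Pd_S H d : Pd H (S d) = Pd H d * INR (H d).
Proof. unfold Pd. rewrite seq_S, map_app. cbn [map]. rewrite prodR_app1. reflexivity. Qed.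

Lemma len_allvecs H d : (forall r, (r < d)%nat -> (1 <= H r)%nat) ->
  0 < Pd H d /\ INR (length (allvecs H d)) <= Pd H d.
Proof. induction d; intros h.
  - unfold Pd, prodR; simpl. lra.
  - destruct IHd as [h1 h2]. intros; apply h; lia.
    rewrite Pd_S. assert (hd : 1 <= INR (H d)) by (apply (le_INR 1); apply h; lia).
    assert (E : length (allvecs H (S d)) = (length (allvecs H d) * (H d - 1))%nat).
    { simpl. generalize (allvecs H d). intros V. induction V; simpl; auto.
      rewrite length_app, length_map, length_seq, IHV. lia. }
    rewrite E, mult_INR, minus_INR by (apply h; lia). change (INR 1) with 1.
    split; [nra|]. assert (0 <= INR (length (allvecs H d))) by apply pos_INR.
    assert (INR (length (allvecs H d)) * (INR (H d) - 1) <= Pd H d * (INR (H d) - 1)) by (apply Rmult_le_compat_r; lra).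
    nra.
Qed.

Lemma sumR_INR_nonneg v : 0 <= sumR (map INR v).
Proof. apply sumR_nonneg_map. intros; apply pos_INR. Qed.

Lemma Td_nonneg f X Y d H : 0 < Y -> (forall r, (r < d)%nat -> (1 <= H r)%nat) -> 0 <= Td f X Y d H.
Proof. intros hY h. rewrite Td_eq. destruct (len_allvecs H d h).
  apply Rmult_le_pos. left; apply Rinv_0_lt_compat; nra.
  apply sumR_nonneg_map. intros; apply Cmod_ge_0. Qed.

Lemma T_step f X Y d H : (forall r, (r <= d)%nat -> (1 <= H r)%nat) -> 1 <= Y -> INR (H d) <= Y ->
  Td f X Y d H ^ 2 <= 4 / INR (H d) + 4 * Td f X Y (S d) H.
Proof.
  intros hH hY hHd.
  destruct (len_allvecs H d) as [hP hlen]. intros; apply hH; lia.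
  assert (h1 : 1 <= INR (H d)) by (apply (le_INR 1); apply hH; lia).
  rewrite !Td_eq. rewrite Pd_S.
  change (allvecs H (S d)) with (flat_map (fun v => map (fun a => v ++ a :: nil) (seq 1 (H d - 1))) (allvecs H d)).
  rewrite sumR_flat.
  set (V := allvecs H d) in *. set (P := Pd H d) in *. set (h := INR (H d)) in *.
  set (inner := fun v => sumR (map (fun a => Cv f X Y (v ++ a :: nil)) (seq 1 (H d - 1)))).
  change (sumR (map (fun x => sumR (map (fun x0 => Cv f X Y (x ++ x0 :: nil)) (seq 1 (H d - 1)))) V))
    with (sumR (map inner V)).
  assert (B1 : forall v, Cv f X Y v ^ 2 <= 2 * Y / h * (2 * Y) + 2 * Y / h * 2 * inner v).
  { intros v. pose proof (one_step (fdiff f (map INR v)) X (Y - sumR (map INR v)) Y (H d)) as O.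
    pose proof (sumR_INR_nonneg v).
    specialize (O ltac:(apply hH; lia) hY ltac:(lra) hHd).
    unfold Cv at 1. replace (X + Y - sumR (map INR v)) with (X + (Y - sumR (map INR v))) by ring.
    fold h in O.
    replace (inner v) with (sumR (map (fun a => Cmod (sum_int_in X (X + (Y - sumR (map INR v)) - INR a)
       (fun n => e (fdiff f (map INR v) (IZR n + INR a) - fdiff f (map INR v) (IZR n))))) (seq 1 (H d - 1)))).
    lra. unfold inner. f_equal. apply map_ext. intros; rewrite Cv_app; reflexivity. }
  set (SC := sumR (map (Cv f X Y) V)).
  set (D := sumR (map inner V)).
  set (len := INR (length V)) in *.
  assert (CS : SC ^ 2 <= len * sumR (map (fun v => Cv f X Y v ^ 2) V)).
  { pose proof (CS_list (map (Cv f X Y) V)). rewrite length_map, map_map in H0. exact H0. }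
  assert (CS2 : sumR (map (fun v => Cv f X Y v ^ 2) V) <= len * (2 * Y / h * (2 * Y)) + 2 * Y / h * 2 * D).
  { unfold len, D. rewrite <- sumR_affine. apply sumR_le_map. exact B1. }
  assert (hD : 0 <= D) by (apply sumR_nonneg_map; intros; apply sumR_nonneg_map; intros; apply Cmod_ge_0).
  assert (hlen0 : 0 <= len) by apply pos_INR.
  set (q := / (Y * P)).
  assert (hq : 0 < q) by (apply Rinv_0_lt_compat; nra).
  set (lam := q * Y * len).
  assert (hlam : 0 <= lam <= 1).
  { unfold lam. split. apply Rmult_le_pos; [|lra]. left; apply Rmult_lt_0_compat; lra. unfold q.
    replace (/ (Y * P) * Y * len) with (len / P) by (field; lra).
    apply Rmult_le_reg_r with P; auto. replace (len / P * P) with len by (field; lra). lra. }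
  replace (/ (Y * (P * h))) with (q / h) by (unfold q; field; lra).
  assert (E : (q * SC) ^ 2 = q ^ 2 * SC ^ 2) by ring. rewrite E.
  assert (S1 : SC ^ 2 <= len * (len * (2 * Y / h * (2 * Y)) + 2 * Y / h * 2 * D)).
  { eapply Rle_trans; [exact CS|]. apply Rmult_le_compat_l; auto. }
  assert (S2 : q ^ 2 * SC ^ 2 <= q ^ 2 * (len * (len * (2 * Y / h * (2 * Y)) + 2 * Y / h * 2 * D))).
  { apply Rmult_le_compat_l; auto. apply pow2_ge_0. }
  replace (q ^ 2 * (len * (len * (2 * Y / h * (2 * Y)) + 2 * Y / h * 2 * D))) with
    (lam ^ 2 * (4 / h) + lam * (4 * (q / h * D))) in S2 by (unfold lam; field; lra).
  assert (0 <= 4 / h) by (unfold Rdiv; apply Rmult_le_pos; [lra| left; apply Rinv_0_lt_compat; lra]).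
  assert (0 <= q / h * D) by (apply Rmult_le_pos; auto; unfold Rdiv; apply Rmult_le_pos; [lra| left; apply Rinv_0_lt_compat; lra]).
  assert (lam ^ 2 * (4 / h) <= 4 / h).
  { rewrite <- (Rmult_1_l (4 / h)) at 2. apply Rmult_le_compat_r; auto. nra. }
  assert (lam * (4 * (q / h * D)) <= 4 * (q / h * D)).
  { rewrite <- (Rmult_1_l (4 * (q / h * D))) at 2. apply Rmult_le_compat_r; lra. }
  assert (ED : sumR (map (fun v => sumR (map (Cv f X Y) (map (fun a => v ++ a :: nil) (seq 1 (H d - 1))))) V) = D)
    by (unfold D, inner; f_equal; apply map_ext; intros; rewrite map_map; reflexivity).
  rewrite ED. lra.
Qed.

Lemma exp_mono x y : x <= y -> exp x <= exp y.
Proof. intros [h|h]. left; apply exp_increasing; auto. subst; lra. Qed.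

Lemma B_pos : 0 < Bconst.
Proof. unfold Bconst. pose proof (sqrt_pos 2). lra. Qed.

Lemma B_sq : Bconst * Bconst = 4 * Bconst + 4.
Proof. unfold Bconst. pose proof (sqrt_sqrt 2 ltac:(lra)). nra. Qed.

Lemma base_step B h T T' t : 0 < B -> B * B = 4 * B + 4 -> 1 <= h -> 0 <= T -> 0 <= T' -> 0 < t ->
  T ^ 2 <= 4 / h + 4 * T' ->
  Rpower B (- (2 * t)) * rpow T (2 * t) <= Rmax (Rpower h (- t)) (Rpower B (- t) * rpow T' t).
Proof.
  intros hB hB2 hh hT hT' ht hsq.
  unfold rpow. destruct (Req_EM_T T 0) as [e0|n0].
  { rewrite Rmult_0_r. eapply Rle_trans; [|apply Rmax_l]. unfold Rpower. left; apply exp_pos. }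
  assert (hT0 : 0 < T) by lra.
  unfold Rpower. rewrite <- exp_plus.
  destruct (Rle_dec (B * B / h) (B * T')) as [c1|c2].
  - assert (T * T <= B * T').
    { assert (4 / h <= 4 * T' / B).
      { apply Rmult_le_reg_l with (B * B / 4). apply Rmult_lt_0_compat; [nra|lra].
        replace (B * B / 4 * (4 / h)) with (B * B / h) by (field; lra).
        replace (B * B / 4 * (4 * T' / B)) with (B * T') by (field; lra). lra. }
      assert (4 * T' / B + 4 * T' = B * T').
      { apply Rmult_eq_reg_l with B; [|lra]. field_simplify; [|lra]. nra. }
      nra. }
    assert (hT'0 : 0 < T') by nra.
    destruct (Req_EM_T T' 0) as [e1|n1]; [lra|].
    eapply Rle_trans; [|apply Rmax_r]. rewrite <- exp_plus. apply exp_mono.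
    assert (ln (T * T) <= ln (B * T')) by (apply ln_le; nra).
    rewrite !ln_mult in H0 by lra. nra.
  - assert (T * T <= B * B / h).
    { assert (4 * T' <= 4 * B / h).
      { assert (B * T' < B * B / h) by lra.
        assert (T' < B / h).
        { apply Rmult_lt_reg_l with B; auto. replace (B * (B / h)) with (B * B / h) by (field; lra). lra. }
        replace (4 * B / h) with (4 * (B / h)) by (field; lra). lra. }
      assert (4 / h + 4 * B / h = B * B / h) by (rewrite hB2; field; lra).
      nra. }
    eapply Rle_trans; [|apply Rmax_l]. apply exp_mono.
    assert (ln (T * T) <= ln (B * B / h)) by (apply ln_le; nra).
    unfold Rdiv in H0. rewrite !ln_mult in H0 by (try apply Rinv_0_lt_compat; nra).
    rewrite ln_Rinv in H0 by lra. nra.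
Qed.

Lemma fold_Rmax_mono b b' l : b <= b' -> fold_right Rmax b l <= fold_right Rmax b' l.
Proof. intros h; induction l; simpl; auto. apply Rle_max_compat_l; auto. Qed.

Lemma main_ind f X Y H : 0 < Y -> forall d,
  (forall r, (r < d)%nat -> (1 <= H r)%nat /\ INR (H r) <= Y) ->
  Cmod (Cmult (RtoC (/ Y)) (sum_int_in X (X + Y) (fun n => e (f (IZR n)))))
  <= Bconst * fold_right Rmax (Rpower Bconst (- / 2 ^ d) * rpow (Td f X Y d H) (/ 2 ^ d))
       (map (fun r => Rpower (INR (H r)) (- / 2 ^ (S r))) (seq 0 d)).
Proof.
  intros hY d. induction d; intros hH.
  - cbn [seq map fold_right]. rewrite pow_O, Rinv_1.
    rewrite Rpower_Ropp, Rpower_1 by apply B_pos.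
    assert (E : Td f X Y 0 H = Cmod (Cmult (RtoC (/ Y)) (sum_int_in X (X + Y) (fun n => e (f (IZR n)))))).
    { rewrite Td_eq. unfold Pd, Cv. cbn [allvecs seq map]. unfold sumR, prodR. cbn [fold_right].
      rewrite Rminus_0_r, Rmult_1_r, Rplus_0_r. rewrite Cmod_mult, Cmod_R, Rabs_right. reflexivity.
      left; apply Rinv_0_lt_compat; auto. }
    rewrite <- E. unfold rpow. pose proof B_pos.
    destruct (Req_EM_T (Td f X Y 0 H) 0) as [e0|n0].
    + rewrite e0. lra.
    + pose proof (Td_nonneg f X Y 0 H hY ltac:(intros; lia)).
      rewrite Rpower_1 by lra. right. field. lra.
  - eapply Rle_trans. apply IHd. intros; apply hH; lia.
    rewrite seq_S, map_app, fold_right_app. cbn [map fold_right]. rewrite Nat.add_0_l.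
    apply Rmult_le_compat_l. left; apply B_pos.
    apply fold_Rmax_mono.
    assert (hd : (1 <= H d)%nat /\ INR (H d) <= Y) by (apply hH; lia).
    assert (h1 : 1 <= INR (H d)) by (apply (le_INR 1); lia).
    replace (/ 2 ^ d) with (2 * / 2 ^ S d) by (simpl; field; apply pow_nonzero; lra).
    apply base_step.
    + apply B_pos.
    + apply B_sq.
    + auto.
    + apply Td_nonneg; auto. intros; apply hH; lia.
    + apply Td_nonneg; auto. intros; apply hH; lia.
    + apply Rinv_0_lt_compat, pow_lt; lra.
    + apply T_step. intros; apply hH; lia. lra. lra.
Qed.

Lemma le_sumR x l : In x l -> (forall y, In y l -> 0 <= y) -> x <= sumR l.
Proof. induction l; simpl; intros hi hp; [contradiction|]. unfold sumR in *; simpl.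
  destruct hi as [<-|hi].
  - assert (0 <= fold_right Rplus 0 l).
    { clear IHl. induction l; simpl; [lra|]. pose proof (hp a0 ltac:(simpl; auto)).
      assert (0 <= fold_right Rplus 0 l) by (apply IHl; intros; apply hp; simpl in *; tauto). lra. }
    lra.
  - pose proof (IHl hi ltac:(intros; apply hp; auto)). pose proof (hp a ltac:(auto)). lra.
Qed.

Theorem theorem7 (X Y : R) (f : R -> R) (d : nat) (H : nat -> nat)
  (hY : 0 < Y)
  (hH : forall r, (r < d)%nat -> (1 <= H r)%nat)
  (hsum : sumR (map (fun r => INR (H r)) (seq 0 d)) <= Y) :
  Cmod (Cmult (RtoC (/ Y)) (sum_int_in X (X + Y) (fun n => e (f (IZR n)))))
  <= Bconst *
     fold_right Rmax
       (Rpower Bconst (- / 2 ^ d) * rpow (Td f X Y d H) (/ 2 ^ d))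
       (map (fun r => Rpower (INR (H r)) (- / 2 ^ (S r))) (seq 0 d)).
Proof.
  apply main_ind; auto. intros r hr. split; auto.
  eapply Rle_trans; [|exact hsum]. apply le_sumR.
  - apply (in_map (fun r => INR (H r))). apply in_seq. lia.
  - intros y hy. apply in_map_iff in hy. destruct hy as [x [<- _]]. apply pos_INR.
Qed.
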